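(* Let $\mathcal C\subseteq\mathcal L_{n,q}$ be an $\mathbb F_{q^n}$-linear rank metric code of dimension $k$ which contains an MRD code $\mathcal G$ equivalent to a generalized Gabidulin code $\mathcal G_{l,s}$ of dimension $l\le k$ (with $\gcd(s,n)=1$). Then there exist an invertible (permutation) linearized polynomial $p(x)$ and $k-l$ linearized polynomials $q_1(x),\ldots,q_{k-l}(x)$ such that \[\mathcal C=\langle q_1(x),\ldots,q_{k-l}(x),p(x),p(x)^{[s]},\ldots,p(x)^{[s(l-1)]}\rangle_{\mathbb F_{q^n}}.\]
   Context: $q$ is a prime power, $[i]:=q^i$. $\mathcal L_{n,q}$ is the $\mathbb F_{q^n}$-vector space of linearized polynomials $f(x)=\sum_{i=0}^{n-1}a_ix^{[i]}$, $a_i\in\mathbb F_{q^n}$, identified with $\mathbb F_q$-linear maps of $\mathbb F_{q^n}$; a permutation (invertible) polynomial is one inducing a bijection. A rank metric code here is an $\mathbb F_q$-subspace of $\mathcal L_{n,q}$ with rank distance $d(f,g)=\mathrm{rk}(f-g)$; it is MRD if $|\mathcal C|=q^{n(n-d+1)}$, $d$ the minimum distance. For $f(x)=\sum_i a_ix^{[i]}$, $f(x)^{[j]}:=x^{[j]}\circ f(x)=\sum_i a_i^{[j]}x^{[(i+j)\bmod n]}$. $\mathcal G_{l,s}=\langle x,x^{[s]},\ldots,x^{[s(l-1)]}\rangle_{\mathbb F_{q^n}}$ with $\gcd(s,n)=1$. Two codes $\mathcal C,\mathcal C'$ are equivalent if there are invertible $h,g\in\mathcal L_{n,q}$ and a field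 automorphism $\sigma$ (acting on coefficients) with $\{h\circ f^\sigma\circ g\colon f\in\mathcal C\}=\mathcal C'$. *)

(* Defs.v *)
From HB Require Import structures.
From mathcomp Require Import all_boot all_order all_algebra all_field.
Set Implicit Arguments. Unset Strict Implicit. Unset Printing Implicit Defensive.
Import GRing.Theory.
Local Open Scope ring_scope.

(* Setting: L is the finite field F_{q^n} (#|L| = q^n).  A linearized
   polynomial f(x) = sum_{i<n} a_i x^{[i]} is represented by its coefficient
   row vector (a_0,...,a_{n-1}) : 'rV[L]_n, which is an L-vector space
   (vectType L); F_{q^n}-linear codes are {vspace 'rV[L]_n}. *)

Section LinPoly.
Variables (L : finFieldType) (q n : nat).

Definition lev (f : 'rV[L]_n) (x : L) : L :=
  \sum_(i < n) f 0 i * x ^+ (q ^ i)%N.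

Definition linvertible (f : 'rV[L]_n) : Prop := bijective (lev f).

(* rank of f: dimension over F_q of its image, i.e. the m with #|Im f| = q^m *)
Definition lrank (f : 'rV[L]_n) : nat :=
  trunc_log q #|[set lev f x | x : L]|.

(* minimum rank distance of a code (n.+1 for the zero code) *)
Definition min_dist (C : {vspace 'rV[L]_n}) : nat :=
  \big[minn/n.+1]_(f : 'rV[L]_n | (f \in C) && (f != 0)) lrank f.

Definition MRD (C : {vspace 'rV[L]_n}) : Prop :=
  #|[set f : 'rV[L]_n | f \in C]| = (q ^ (n * (n - min_dist C + 1)))%N.

(* f(x)^{[j]} = x^{[j]} o f(x) = sum_i a_i^{[j]} x^{[(i+j) mod n]} *)
Definition lfrob (j : nat) (f : 'rV[L]_n) : 'rV[L]_n :=
  \row_(k < n) \sum_(i < n | ((i + j) %% n)%N == k :> nat) f 0 i ^+ (q ^ j)%N.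

Definition lmon (t : nat) : 'rV[L]_n := \row_(k < n) ((t %% n)%N == k :> nat)%:R.

Definition gabidulin (l s : nat) : {vspace 'rV[L]_n} :=
  <<[seq lmon (s * i) | i <- iota 0 l]>>%VS.

(* equivalence: C' = { h o f^sigma o g : f in C } with h, g invertible and
   sigma a field automorphism acting on coefficients; composition is
   expressed through the induced maps (linearized polynomials of q-degree
   < n are in bijection with F_q-linear maps of L). *)
Definition code_equiv (C C' : {vspace 'rV[L]_n}) : Prop :=
  exists (h g : 'rV[L]_n) (sigma : {rmorphism L -> L}),
    [/\ linvertible h, linvertible g, bijective sigma &
      forall f' : 'rV[L]_n, f' \in C' <->
        exists2 f, f \in C &
          lev f' =1 (lev h \o lev (map_mx sigma f) \o lev g)].

End LinPoly.

(* Main.v *)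
Set Warnings "-notation-overridden,-ambiguous-paths".
Require Import Defs.
From HB Require Import structures.
From mathcomp Require Import all_boot all_order all_algebra all_fingroup all_solvable all_field zify ring.
Set Implicit Arguments. Unset Strict Implicit. Unset Printing Implicit Defensive.
Import GRing.Theory.
Local Open Scope ring_scope.

Lemma q_gt1 (L : finFieldType) (q n : nat) : (0 < n)%N -> #|L| = (q ^ n)%N -> (1 < q)%N.
Proof.
move=> n0 cL; have := finNzRing_gt1 L; rewrite cL.
case: q {cL} => [|[|q]] //; first by rewrite exp0n.
by rewrite exp1n.
Qed.

Lemma frob_card (L : finFieldType) (q n : nat) (x : L) : #|L| = (q ^ n)%N ->
  forall a, x ^+ (q ^ (a * n)) = x.
Proof.
move=> cL; elim=> [|a IH]; first by rewrite mul0n expn0 expr1.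
by rewrite mulSn expnD exprM -cL expf_card IH.
Qed.

Lemma frob_mod (L : finFieldType) (q n : nat) (x : L) : #|L| = (q ^ n)%N ->
  forall m, x ^+ (q ^ m) = x ^+ (q ^ (m %% n)).
Proof.
move=> cL m; rewrite {1}(divn_eq m n) expnD exprM.
by rewrite (frob_card _ cL).
Qed.

Lemma pnat_q (L : finFieldType) (q n : nat) : (0 < n)%N -> #|L| = (q ^ n)%N ->
  [pchar L].-nat q.
Proof.
move=> n0 cL.
have [p pr pc] := finPcharP L.
have ab := fin_ring_pchar_abelem pc.
have pg := abelem_pgroup ab.
have : p.-nat #|L| by move: pg; rewrite /pgroup cardsT.
rewrite cL pnatX => /orP[] ; last by rewrite eqn0Ngt n0.
by move=> H; rewrite (eq_pnat _ (pcharf_eq pc)).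
Qed.

Lemma frobD (L : finFieldType) (q n : nat) (x y : L) : (0 < n)%N -> #|L| = (q ^ n)%N ->
  forall j, (x + y) ^+ (q ^ j) = x ^+ (q ^ j) + y ^+ (q ^ j).
Proof.
move=> n0 cL j; apply: exprDn_pchar.
by rewrite pnatX (pnat_q n0 cL).
Qed.

Lemma levZD (L : finFieldType) (q n : nat) (a : L) (f g : 'rV[L]_n) x :
  lev q (a *: f + g) x = a * lev q f x + lev q g x.
Proof.
rewrite /lev mulr_sumr -big_split /=; apply: eq_bigr => i _.
by rewrite !mxE mulrDl mulrA.
Qed.

Lemma levZ (L : finFieldType) (q n : nat) (a : L) (f : 'rV[L]_n) x :
  lev q (a *: f) x = a * lev q f x.
Proof. by rewrite /lev mulr_sumr; apply: eq_bigr => i _; rewrite mxE mulrA. Qed.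

Lemma lev0 (L : finFieldType) (q n : nat) x : lev q (0 : 'rV[L]_n) x = 0.
Proof. by rewrite /lev big1 // => i _; rewrite mxE mul0r. Qed.

Lemma lev_sum (L : finFieldType) (q n m : nat) (c : 'I_m -> L) (F : 'I_m -> 'rV[L]_n) x :
  lev q (\sum_i c i *: F i) x = \sum_i c i * lev q (F i) x.
Proof.
elim/big_rec2: _ => [|i y f _ <-]; first by rewrite lev0.
by rewrite levZD.
Qed.

Lemma lev_lmon (L : finFieldType) (q n : nat) (t : nat) x :
  (0 < n)%N -> #|L| = (q ^ n)%N -> lev q (lmon L n t) x = x ^+ (q ^ t).
Proof.
move=> n0 cL; rewrite /lev (bigD1 (Ordinal (ltn_pmod t n0))) //= big1.
  by rewrite mxE eqxx mul1r addr0 -(frob_mod _ cL).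
move=> i /negbTE ne; rewrite mxE.
case: eqP => [e|]; last by rewrite mul0r.
by move: ne; rewrite -val_eqE /= e eqxx.
Qed.

Lemma lev_lfrob (L : finFieldType) (q n : nat) (j : nat) (f : 'rV[L]_n) x :
  (0 < n)%N -> #|L| = (q ^ n)%N -> lev q (lfrob q j f) x = (lev q f x) ^+ (q ^ j).
Proof.
move=> n0 cL.
have Q0 : (0 < q ^ j)%N by rewrite expn_gt0 ltnW // (q_gt1 n0 cL).
have z : 0 ^+ (q ^ j) = 0 :> L by rewrite expr0n eqn0Ngt Q0.
rewrite /lev (big_morph (fun y : L => y ^+ (q ^ j)) (fun x y => frobD x y n0 cL j) z).
rewrite /lfrob [LHS](eq_bigr (fun i : 'I_n => \sum_(i0 < n | ((i0 + j) %% n)%N == i :> nat) f 0 i0 ^+ (q ^ j) * x ^+ (q ^ i))); last by move=> i _; rewrite mxE big_distrl.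
rewrite (exchange_big_dep xpredT) //=; apply: eq_bigr => i _.
rewrite (bigD1 (Ordinal (ltn_pmod (i + j) n0))) //= big1.
  rewrite addr0 exprMn -exprM -expnD -(frob_mod _ cL) //.
move=> k /andP[/eqP e ne]; exfalso; apply/negP: ne.
by rewrite negbK -val_eqE /= e.
Qed.

Definition rot (L : finFieldType) (n : nat) (r : nat) (t : 'rV[L]_n) : 'rV[L]_n :=
  \row_(k < n) \sum_(i < n | ((i + r) %% n)%N == k :> nat) t 0 i.

Lemma lev_rot (L : finFieldType) (q n : nat) (r : nat) (t : 'rV[L]_n) x :
  (0 < n)%N -> #|L| = (q ^ n)%N -> lev q (rot r t) x = lev q t (x ^+ (q ^ r)).
Proof.
move=> n0 cL; rewrite /lev /rot [LHS](eq_bigr (fun i : 'I_n => \sum_(i0 < n | ((i0 + r) %% n)%N == i :> nat) t 0 i0 * x ^+ (q ^ i))); last by move=> i _; rewrite mxE big_distrl.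
rewrite (exchange_big_dep xpredT) //=; apply: eq_bigr => i _.
rewrite (bigD1 (Ordinal (ltn_pmod (i + r) n0))) //= big1.
  by rewrite addr0 -exprM -expnD addnC -(frob_mod _ cL).
move=> k /andP[/eqP e ne]; exfalso; apply/negP: ne.
by rewrite negbK -val_eqE /= e.
Qed.

Lemma rot_entry (L : finFieldType) (n : nat) (r : nat) (t : 'rV[L]_n) (i : 'I_n)
  (n0 : (0 < n)%N) : rot r t 0 (Ordinal (ltn_pmod (i + r) n0)) = t 0 i.
Proof.
rewrite /rot mxE (bigD1 i) //= big1 ?addr0 // => k /andP[/eqP e ne].
exfalso; apply/negP: ne; rewrite negbK; apply/eqP/val_inj => /=.
have := e; move/eqP; rewrite -/(_ == _ %[mod n]) eqn_modDr.
by rewrite !modn_small // => /eqP.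
Qed.

Lemma sum_pick (L : finFieldType) (N c : nat) (F : nat -> L) : (c < N)%N ->
  \sum_(i < N) (i == c :> nat)%:R * F i = F c.
Proof.
move=> lt; rewrite (bigD1 (Ordinal lt)) //= eqxx mul1r big1 ?addr0 // => i ne.
case: eqP => [e|]; last by rewrite mul0r.
by move: ne; rewrite -val_eqE /= e eqxx.
Qed.

Lemma lev_inj (L : finFieldType) (q n : nat) (f g : 'rV[L]_n) :
  (0 < n)%N -> #|L| = (q ^ n)%N ->
  (forall x, lev q f x = lev q g x) -> f = g.
Proof.
move=> n0 cL Hfg.
have q1 := q_gt1 n0 cL.
set v := f - g.
have hv : forall x, lev q v x = 0.
  by move=> x; rewrite /v addrC -scaleN1r levZD Hfg mulN1r addNr.
suff : v = 0 by move/eqP; rewrite subr_eq0 => /eqP.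
set N := (q ^ n.-1).+1.
have ltN : forall k : 'I_n, (q ^ k < N)%N.
  move=> k; rewrite ltnS leq_exp2l //; by rewrite -ltnS prednK.
pose P : {poly L} := \poly_(i < N) (\sum_(k < n) v 0 k * (i == (q ^ k)%N :> nat)%:R).
have PE : forall x, P.[x] = lev q v x.
  move=> x; rewrite horner_poly /lev.
  under eq_bigr do rewrite mulr_suml.
  rewrite exchange_big /=; apply: eq_bigr => k _.
  rewrite -(sum_pick (fun i => v 0 k * x ^+ i) (ltN k)); apply: eq_bigr => i _.
  by rewrite mulrAC mulrC.
have P0 : P = 0.
  apply/eqP; apply/negPn/negP => nz.
  have := max_poly_roots nz (rs := enum L).
  rewrite enum_uniq.
  have -> : all (root P) (enum L).
    by apply/allP => x _; rewrite /root PE hv.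
  move=> /(_ isT isT); rewrite -cardE cL.
  have := size_poly N (fun i => \sum_(k < n) v 0 k * (i == (q ^ k)%N :> nat)%:R).
  rewrite -/P => h1 h2.
  have := leq_trans h2 h1; rewrite /N ltnS leqNgt => /negP; apply.
  have e : (q ^ n = q * q ^ n.-1)%N by rewrite -expnS prednK.
  rewrite e.
  have : (0 < q ^ n.-1)%N by rewrite expn_gt0 ltnW.
  move: (q ^ n.-1)%N => m m0.
  apply: leq_trans (_ : (2 * m <= q * m)%N); last by rewrite leq_mul2r q1 orbT.
  by rewrite mul2n -addnn -addn1 leq_add2l.
apply/rowP => k; rewrite [X in _ = X]mxE.
have := congr1 (fun p : {poly L} => p`_(q ^ k)%N) P0.
rewrite coef_poly ltN coef0 => <-.
rewrite (bigD1 k) //= eqxx mulr1 big1 ?addr0 // => k' ne.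
rewrite eqn_exp2l // eq_sym.
by move: ne; rewrite -val_eqE => /negbTE ->; rewrite mulr0.
Qed.

Lemma mod_cancel (s n a b : nat) : coprime s n ->
  (s * a == s * b %[mod n]) -> (a == b %[mod n]).
Proof.
move=> cop.
wlog ba : a b / (b <= a)%N.
  move=> W; case: (leqP b a) => h; first exact: W.
  by rewrite eq_sym => e; rewrite eq_sym; apply: W (ltnW h) e.
rewrite !eqn_mod_dvd ?leq_mul2l ?ba ?orbT // -mulnBr.
by rewrite Gauss_dvdr // coprime_sym.
Qed.

Lemma size_gab (L : finFieldType) (n l s : nat) :
  size [seq lmon L n (s * i) | i <- iota 0 l] = l.
Proof. by rewrite size_map size_iota. Qed.

Lemma nth_gab (L : finFieldType) (n l s i : nat) : (i < l)%N ->
  [seq lmon L n (s * i) | i <- iota 0 l]`_i = lmon L n (s * i).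
Proof.
move=> il; rewrite (nth_map 0%N) ?size_iota // nth_iota //.
Qed.

Lemma lmon_in_gab (L : finFieldType) (n l s j : nat) : (j < l)%N ->
  lmon L n (s * j) \in gabidulin L n l s.
Proof.
move=> jl; apply: memv_span; apply/mapP; exists j => //.
by rewrite mem_iota.
Qed.

Lemma gab_support (L : finFieldType) (n l s : nat) (v : 'rV[L]_n) :
  v \in gabidulin L n l s -> forall k : 'I_n, v 0 k != 0 ->
  exists2 m, (m < l)%N & ((s * m) %% n)%N = k.
Proof.
move=> vin k nz.
have := coord_span (X := in_tuple [seq lmon L n (s * i) | i <- iota 0 l]) vin.
move=> e; move: nz; rewrite e.
rewrite summxE.
set X := in_tuple _.
case: (boolP [exists i : 'I_l, ((s * i) %% n)%N == k :> nat]).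
  by move=> /existsP[i /eqP ei] _; exists i.
move=> /existsPn nm; rewrite big1 ?eqxx // => i _.
have il : (i < l)%N by exact: leq_trans (ltn_ord i) (eq_leq (size_gab L n l s)).
rewrite mxE nth_gab // mxE.
case: eqP => [ee|]; last by rewrite mulr0.
by have := nm (Ordinal il); rewrite /= ee eqxx.
Qed.

Lemma gab_free (L : finFieldType) (n l s : nat) : coprime s n -> (l <= n)%N ->
  free [seq lmon L n (s * i) | i <- iota 0 l].
Proof.
move=> cop ln.
have P := @freeP _ _ _ (in_tuple [seq lmon L n (s * i) | i <- iota 0 l]).
apply/P => c hc i.
have il : (i < l)%N by exact: leq_trans (ltn_ord i) (eq_leq (size_gab L n l s)).
have n0 : (0 < n)%N by lia.
have := congr1 (fun w : 'rV[L]_n => w 0 (Ordinal (ltn_pmod (s * i) n0))) hc.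
rewrite summxE mxE => <-.
rewrite (bigD1 i) //= big1 ?addr0.
  by rewrite mxE nth_gab // mxE eqxx mulr1.
move=> i' ne; rewrite mxE nth_gab; last first.
  by exact: leq_trans (ltn_ord i') (eq_leq (size_gab L n l s)).
rewrite mxE /=.
case: eqP => [ee|]; last by rewrite mulr0.
exfalso; move/negP: ne; apply.
have i'l : (i' < l)%N by exact: leq_trans (ltn_ord i') (eq_leq (size_gab L n l s)).
have := mod_cancel cop (introT eqP ee).
by rewrite !modn_small ?(leq_trans _ ln) // => /eqP e; apply/eqP/val_inj.
Qed.

Lemma idealiser (L : finFieldType) (n l s : nat) (t : 'rV[L]_n) (n0 : (0 < n)%N) :
  coprime s n -> (0 < l)%N -> (l < n)%N ->
  t \in gabidulin L n l s ->
  (forall j, (j < l)%N -> rot (s * j) t \in gabidulin L n l s) ->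
  forall i : 'I_n, i != Ordinal n0 -> t 0 i = 0.
Proof.
move=> cop l0 ln tin rin i ni.
apply/eqP; apply: contraNT ni => nz.
have [m ml em] := gab_support tin nz.
set j := minn (l - 1) (n - 1 - m).
have jl : (j < l)%N by rewrite /j; lia.
have := rin j jl => rj.
have nz2 : rot (s * j) t 0 (Ordinal (ltn_pmod (i + s * j) n0)) != 0.
  by rewrite rot_entry.
have [m' m'l em'] := gab_support rj nz2.
move: em' => /= em'.
have mn : (m < n)%N by lia.
have : (s * m' == s * (m + j) %[mod n]).
  by rewrite em' -em modnDml mulnDr eqxx.
move/(mod_cancel cop); rewrite !modn_small; last 2 first.
- lia.
- rewrite /j; lia.
move/eqP => e.
case: (posnP m) => [m0|mpos].
  apply/eqP/val_inj => /=; by rewrite -em m0 muln0 mod0n.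
exfalso; move: e m'l; rewrite /j; lia.
Qed.

Lemma complete_basis (K : fieldType) (vT : vectType K) (C : {vspace vT}) (X : seq vT)
  (k l : nat) : free X -> size X = l -> (<<X>> <= C)%VS -> \dim C = k ->
  exists qs : (k - l).-tuple vT, C = <<(qs : seq vT) ++ X>>%VS.
Proof.
move=> fX sX XC dC.
have dX : \dim <<X>> = l by move/eqP: fX => ->.
have dD : \dim (C :\: <<X>>) = (k - l)%N.
  have := dimv_cap_compl C <<X>>.
  rewrite (capv_idPr XC) dX dC => <-; by rewrite addKn.
exists (tcast dD (vbasis (C :\: <<X>>))).
rewrite span_cat val_tcast.
rewrite (span_basis (vbasisP _)) addv_diff.
by apply/esym/addv_idPl.
Qed.

Lemma free_seq_iota (K : fieldType) (vT : vectType K) (l : nat) (F : nat -> vT) :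
  (forall c : nat -> K, \sum_(i < l) c i *: F i = 0 -> forall i, (i < l)%N -> c i = 0) ->
  free [seq F i | i <- iota 0 l].
Proof.
move=> H.
set X := [seq F i | i <- iota 0 l].
have sX : size X = l by rewrite size_map size_iota.
have P := @freeP _ _ _ (in_tuple X).
apply/P => k hk i.
pose c m := k (insubd i m).
have E : \sum_(j < size X) k j *: X`_j = \sum_(m < l) c m *: F m.
  transitivity (\sum_(j < size X) c j *: X`_j).
    by apply: eq_bigr => j _; rewrite /c valKd.
  rewrite -(big_mkord xpredT (fun m => c m *: X`_m)) sX big_mkord.
  apply: eq_bigr => m _.
  by rewrite /X (nth_map 0%N) ?size_iota // nth_iota.
have il : (i < l)%N by rewrite -sX.
by have := H c (etrans (esym E) (hk)) i il; rewrite /c valKd.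
Qed.

Lemma lmon_indep (L : finFieldType) (n l s : nat) : coprime s n -> (l <= n)%N ->
  forall c : nat -> L, \sum_(i < l) c i *: lmon L n (s * i) = 0 ->
  forall i, (i < l)%N -> c i = 0.
Proof.
move=> cop ln c hc i il.
have n0 : (0 < n)%N by lia.
have := congr1 (fun w : 'rV[L]_n => w 0 (Ordinal (ltn_pmod (s * i) n0))) hc.
rewrite summxE mxE => <-.
rewrite (bigD1 (Ordinal il)) //= big1 ?addr0.
  by rewrite mxE mxE eqxx mulr1.
move=> i' ne; rewrite mxE mxE /=.
case: eqP => [ee|]; last by rewrite mulr0.
exfalso; move/negP: ne; apply.
have := mod_cancel cop (introT eqP ee).
rewrite !modn_small ?(leq_trans _ ln) // => /eqP e; by apply/eqP/val_inj.
Qed.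

Lemma gab_free2 (L : finFieldType) (n l s : nat) : coprime s n -> (l <= n)%N ->
  free [seq lmon L n (s * i) | i <- iota 0 l].
Proof. by move=> cop ln; apply: free_seq_iota; apply: lmon_indep. Qed.

Lemma count_surj (L : finFieldType) (n : nat) (A B : {vspace 'rV[L]_n})
  (R : 'rV[L]_n -> 'rV[L]_n -> bool) :
  \dim A = \dim B ->
  (forall f', f' \in A -> exists2 f, f \in B & R f' f) ->
  (forall f1 f2 f, R f1 f -> R f2 f -> f1 = f2) ->
  forall f, f \in B -> exists2 f', f' \in A & R f' f.
Proof.
move=> dAB ex un f fB.
pose psi f' := odflt 0 [pick f | (f \in B) && R f' f].
have psiP : forall f', f' \in A -> (psi f' \in B) && R f' (psi f').
  move=> f' fA; rewrite /psi; case: pickP => [x -> //|none].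
  by have [x xB rx] := ex f' fA; have := none x; rewrite xB rx.
set SA := [set f' | f' \in A]; set SB := [set f | f \in B].
have inj : {in SA &, injective psi}.
  move=> x y; rewrite !inE => xA yA e.
  have /andP[_ rx] := psiP x xA; have /andP[_ ry] := psiP y yA.
  by apply: (un x y (psi y)); rewrite // -e.
have sub : psi @: SA \subset SB.
  by apply/subsetP => z /imsetP[x]; rewrite !inE => xA ->; case/andP: (psiP x xA).
have eqS : psi @: SA = SB.
  apply/eqP; rewrite eqEcard sub /= card_in_imset // !cardsE !card_vspace dAB.
  by [].
have : f \in psi @: SA by rewrite eqS inE.
case/imsetP => x; rewrite inE => xA ->; exists x => //.
by case/andP: (psiP x xA).
Qed.

Lemma lev_map (L : finFieldType) (q n : nat) (sig : {rmorphism L -> L}) (f : 'rV[L]_n) y :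
  lev q (map_mx sig f) (sig y) = sig (lev q f y).
Proof.
rewrite /lev rmorph_sum; apply: eq_bigr => i _.
by rewrite mxE rmorphM rmorphXn.
Qed.

Lemma frob0 (L : finFieldType) (q i : nat) : (1 < q)%N -> (0 : L) ^+ (q ^ i) = 0.
Proof. by move=> q1; rewrite expr0n expn_eq0 /=; case: q q1. Qed.

Set Strict Implicit. Unset Implicit Arguments.

Theorem lemma3p7 (L : finFieldType) (q n : nat) (n_gt0 : (0 < n)%N)
    (cardL : #|L| = (q ^ n)%N) (k l s : nat) (cop : coprime s n)
    (C G : {vspace 'rV[L]_n})
    (dimC : \dim C = k) (dimG : \dim G = l) (lk : (l <= k)%N)
    (GC : (G <= C)%VS) (mrdG : MRD q G)
    (eqG : code_equiv q G (@gabidulin L n l s)) :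
  exists p : 'rV[L]_n, linvertible q p /\
    exists qs : (k - l).-tuple 'rV[L]_n,
      C = <<(qs : seq 'rV[L]_n) ++ [seq lfrob q (s * i) p | i <- iota 0 l]>>%VS.
Proof.
have q1 := q_gt1 n_gt0 cardL.
have dimfull : \dim (fullv : {vspace 'rV[L]_n}) = n.
  by rewrite dimvf dim_matrix; exact: mul1n.
have ln : (l <= n)%N by have := dimvS (subvf G); rewrite dimG dimfull.
move: eqG => [h [g [sig [[hinv hK Kh] [ginv gK Kg] [sinv sK Ks] Heq]]]].
case: (posnP l) => [l0|lpos].
  rewrite l0; exists h; split; first by exists hinv.
  have := @complete_basis _ _ C [::] k 0 (@nil_free _ _) erefl.
  rewrite span_nil sub0v => /(_ isT dimC) [qs e]; by exists qs.
have Hinj : injective (lev q h) := can_inj hK.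
have [f0 f0G e0] : exists2 f0, f0 \in G &
    forall y, lev q h (lev q (map_mx sig f0) (lev q g y)) = y.
  have := @lmon_in_gab L n l s 0 lpos; rewrite muln0 => /(Heq _).1 [f fG ef].
  by exists f => // y; have := ef y => /= <-; rewrite lev_lmon // expn0 expr1.
have fjP : forall j, (j < l)%N -> exists2 fj, fj \in G &
    forall y, lev q h (lev q (map_mx sig fj) (lev q g y)) = y ^+ (q ^ (s * j)).
  move=> j jl; have := @lmon_in_gab L n l s j jl => /(Heq _).1 [f fG ef].
  by exists f => // y; have := ef y => /= <-; rewrite lev_lmon.
have MH : forall u, lev q (map_mx sig f0) (lev q g (lev q h u)) = u.
  by move=> u; apply: Hinj; rewrite e0.
have F0inj : injective (lev q f0).
  have k1 : forall x, lev q h (sig (lev q f0 x)) = ginv (sig x).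
    by move=> x; rewrite -lev_map -{1}(Kg (sig x)) e0.
  move=> x1 x2 e; have := k1 x1; rewrite e k1 => /(congr1 (lev q g)).
  by rewrite !Kg => /(congr1 sinv); rewrite !sK.
have F0bij : bijective (lev q f0) := injF_bij F0inj.
have frobG : forall j, (j < l)%N -> lfrob q (s * j) f0 \in G.
  case: (ltngtP l n) => [lt||el]; last first.
  - have -> : G = fullv.
      by apply/eqP; rewrite -(dimv_leqif_eq (subvf G)) dimG dimfull el.
    by move=> j _; rewrite memvf.
  - by rewrite ltnNge ln.
  have surj : forall f, f \in G -> exists2 t, t \in gabidulin L n l s &
      forall y, lev q t y = lev q h (lev q (map_mx sig f) (lev q g y)).
    move=> f fG.
    pose R := fun t f : 'rV[L]_n => [forall y, lev q t y == lev q h (lev q (map_mx sig f) (lev q g y))].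
    have dE : \dim (gabidulin L n l s) = \dim G.
      rewrite /gabidulin; move/eqP: (gab_free2 L cop ln) => ->.
      by rewrite size_map size_iota dimG.
    have exE : forall f', f' \in gabidulin L n l s -> exists2 f, f \in G & R f' f.
      move=> f' /(Heq f').1 [f1 f1G ef]; exists f1 => //.
      by apply/forallP => y; apply/eqP; exact: ef y.
    have unE : forall f1 f2 f, R f1 f -> R f2 f -> f1 = f2.
      move=> t1 t2 f1 /forallP e1 /forallP e2; apply: (lev_inj n_gt0 cardL) => y.
      by rewrite (eqP (e1 y)) (eqP (e2 y)).
    have [t tin /forallP et] := count_surj dE exE unE fG.
    by exists t => // y; apply/eqP.
  have scal : forall mu, exists c, forall u, lev q h (mu * u) = c * lev q h u.
    move=> mu; pose nu := sinv mu.
    have Msc : forall (f : 'rV[L]_n) (z : L), lev q (map_mx sig (nu *: f)) z = mu * lev q (map_mx sig f) z.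
      by move=> f z; rewrite map_mxZ levZ /nu Ks.
    have [t tin et] := surj (nu *: f0) (memvZ _ f0G).
    have rin : forall j, (j < l)%N -> rot (s * j) t \in gabidulin L n l s.
      move=> j jl; have [fj fjG ej] := fjP j jl.
      have [tj tjin etj] := surj (nu *: fj) (memvZ _ fjG).
      suff <- : tj = rot (s * j) t by [].
      apply: (lev_inj n_gt0 cardL) => y.
      rewrite etj lev_rot // et !Msc.
      congr (lev q h (mu * _)).
      by apply: Hinj; rewrite ej e0.
    have t0 := @idealiser L n l s t n_gt0 cop lpos lt tin rin.
    have Lt : forall x, lev q t x = t 0 (Ordinal n_gt0) * x.
      move=> x; rewrite /lev (bigD1 (Ordinal n_gt0)) //= big1 ?addr0 ?expn0 ?expr1 // => i ni.
      by rewrite t0 // mul0r.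
    exists (t 0 (Ordinal n_gt0)) => u.
    by have := et (lev q h u); rewrite Msc MH Lt.
  set a := lev q h 1.
  have a0 : a != 0.
    apply/eqP => e; have : lev q h 1 = lev q h 0.
      rewrite -/a e /lev big1 // => i _; by rewrite frob0 // mulr0.
    by move/Hinj/eqP; rewrite oner_eq0.
  have mulH : forall mu u, lev q h (mu * u) = lev q h mu / a * lev q h u.
    move=> mu u; have [c hc] := scal mu.
    have := hc 1; rewrite mulr1 -/a => e1.
    by rewrite hc e1 mulfK.
  have powH : forall w m, lev q h (w ^+ m) = (lev q h w / a) ^+ m * a.
    move=> w; elim=> [|m IH]; first by rewrite expr0 mul1r.
    by rewrite exprS mulH IH exprS mulrA.
  move=> j jl; have [fj fjG ej] := fjP j jl.
  set Q := (q ^ (s * j))%N.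
  pose b := hinv (a ^+ 2 / a ^+ Q).
  pose lam := sinv b.
  suff -> : lfrob q (s * j) f0 = lam *: fj by rewrite memvZ.
  apply: (lev_inj n_gt0 cardL) => x.
  rewrite lev_lfrob // levZ.
  apply: (can_inj sK); rewrite rmorphM rmorphXn /lam Ks -!lev_map.
  rewrite -(Kg (sig x)); set y := ginv (sig x).
  apply: Hinj; rewrite mulH ej powH /b Kh.
  rewrite -{2}(e0 y); set z := lev q h _.
  have aQ : a ^+ Q != 0 by rewrite expf_neq0.
  rewrite expr_div_n expr2.
  rewrite -/Q; field; by rewrite aQ a0.
have Xfree : free [seq lfrob q (s * i) f0 | i <- iota 0 l].
  apply: free_seq_iota => c hc i il.
  apply: (@lmon_indep L n l s cop ln c _ i il).
  apply: (lev_inj n_gt0 cardL) => y.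
  have [x <-] : exists x, lev q f0 x = y.
    by case: F0bij => finv _ K; exists (finv y); rewrite K.
  rewrite lev0 lev_sum.
  have := congr1 (fun w => lev q w x) hc; rewrite /= lev0 lev_sum => E.
  rewrite -[RHS]E; apply: eq_bigr => i' _; by rewrite lev_lmon // lev_lfrob.
exists f0; split; first exact: F0bij.
apply: complete_basis Xfree _ _ dimC.
  by rewrite size_map size_iota.
apply/span_subvP => v /mapP[j]; rewrite mem_iota => /andP[_ jl] ->.
by apply: (subvP GC); apply: frobG.
Qed.
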